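(* Assume (V1), (V2), (V3), and (In), and let $\delta>0$. Then for every $n$ and all $t,s\ge\delta$, $$\int_0^L|\check\rho^n(t,z)-\check\rho^n(s,z)|\,dz\le R^2\big[C_\delta+(v_{\max}-v(R))\big]|t-s|,$$ where $C_\delta:=3(v_{\max}-v(R))+2(\bar x_{\max}-\bar x_{\min})/\delta$.
   Context: (V1): $v\in C^1([0,\infty))$ strictly decreasing; (V2): $v(0)=v_{\max}\in\mathbb{R}$; (V3): $\rho\mapsto\rho\,v'(\rho)$ is non-increasing on $[0,\infty)$. $\mathcal{M}_L$: nonnegative compactly supported Radon measures on $\mathbb{R}$ of mass $L>0$. (In): $\bar\rho\in\mathcal{M}_L\cap L^\infty(\mathbb{R})$; $R:=\|\bar\rho\|_{L^\infty}$; $[\bar x_{\min},\bar x_{\max}]$ smallest closed interval containing $\mathrm{supp}\,\bar\rho$. For $n\in\mathbb{N}$: $N_n=2^n$, $\ell_n=2^{-n}L$, $\bar x^n_0=\bar x_{\min}$, $\bar x^n_i=\sup\{x:\int_{\bar x^n_{i-1}}^x\bar\rho<\ell_n\}$; $(x^n_i(t))$ solves $\dot x^n_{N_n}=v_{\max}$, $\dot x^n_i=v(\ell_n/(x^n_{i+1}-x^n_i))$, $x^n_i(0)=\bar x^n_i$; $y^n_i:=\ell_n/(x^n_{i+1}-x^n_i)$; $\check\rho^n(t,z):=\sum_{i=0}^{N_n-1}y^n_i(t)\chi_{[i\ell_n,(i+1)\ell_n)}(z)$, $z\in[0,L]$. *)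

(* Defs.v *)
From Stdlib Require Import Reals Lra.
Open Scope R_scope.

Definition V1 (v dv : R -> R) : Prop :=
  (forall r, 0 < r -> derivable_pt_lim v r (dv r)) /\
  limit1_in (fun h => (v h - v 0) / h) (fun h => 0 < h) (dv 0) 0 /\
  (forall r, 0 <= r -> limit1_in dv (fun u => 0 <= u) (dv r) r) /\
  (forall a b, 0 <= a -> a < b -> v b < v a).

Definition V2 (v : R -> R) (vmax : R) : Prop := v 0 = vmax.

Definition V3 (dv : R -> R) : Prop :=
  forall a b, 0 <= a -> a <= b -> b * dv b <= a * dv a.

(* ---------- initial datum (In) ----------
   The absolutely continuous measure rhobar (density in L^infty) is encoded
   by its cumulative distribution function F x = int_{-oo}^x rhobar. *)

Definition cdf_ML (F : R -> R) (L : R) : Prop :=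
  (forall x y, x <= y -> F x <= F y) /\
  (exists a b, forall x, (x <= a -> F x = 0) /\ (b <= x -> F x = L)).

Definition lip_bound (F : R -> R) (R0 : R) : Prop :=
  forall x y, x <= y -> F y - F x <= R0 * (y - x).

(* R = ||rhobar||_{L^infty}: the least R0 with F y - F x <= R0 (y - x). *)
Definition is_Linf_norm (F : R -> R) (R0 : R) : Prop :=
  lip_bound F R0 /\ (forall R1, lip_bound F R1 -> R0 <= R1).

Definition in_supp (F : R -> R) (x : R) : Prop :=
  forall e, 0 < e -> 0 < F (x + e) - F (x - e).

Definition smallest_interval (F : R -> R) (xmin xmax : R) : Prop :=
  (forall x, in_supp F x -> xmin <= x <= xmax) /\
  (forall a b, (forall x, in_supp F x -> a <= x <= b) ->
     a <= xmin /\ xmax <= b).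

Definition Nn (n : nat) : nat := (2 ^ n)%nat.
Definition elln (L : R) (n : nat) : R := L / 2 ^ n.

Definition initial_points (F : R -> R) (L xmin : R) (n : nat)
  (xbar : nat -> R) : Prop :=
  xbar 0%nat = xmin /\
  forall i, (1 <= i <= Nn n)%nat ->
    is_lub (fun x => F x - F (xbar (i - 1)%nat) < elln L n) (xbar i).

Definition right_cont0 (f : R -> R) : Prop :=
  limit1_in f (fun t => 0 <= t) (f 0) 0.

(* x solves the follow-the-leader system on [0,oo) with datum xbar
   (the density l_n/(x_{i+1}-x_i) must lie in the domain [0,oo) of v,
   i.e. the particles stay strictly ordered). *)
Definition ftl_solution (v : R -> R) (vmax L : R) (n : nat)
  (xbar : nat -> R) (x : nat -> R -> R) : Prop :=
  (forall i, (i <= Nn n)%nat -> x i 0 = xbar i) /\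
  (forall i, (i <= Nn n)%nat -> right_cont0 (x i)) /\
  (forall i t, (i < Nn n)%nat -> 0 <= t -> x i t < x (S i) t) /\
  (forall t, 0 < t -> derivable_pt_lim (x (Nn n)) t vmax) /\
  (forall i t, (i < Nn n)%nat -> 0 < t ->
     derivable_pt_lim (x i) t (v (elln L n / (x (S i) t - x i t)))).

Definition yn (L : R) (n : nat) (x : nat -> R -> R) (i : nat) (t : R) : R :=
  elln L n / (x (S i) t - x i t).

Definition chi (a b z : R) : R :=
  if Rle_dec a z then (if Rlt_dec z b then 1 else 0) else 0.

Fixpoint sum_upto (f : nat -> R) (k : nat) : R :=
  match k with
  | O => 0
  | S k' => sum_upto f k' + f k'
  end.

Definition rho_check (L : R) (n : nat) (x : nat -> R -> R) (t z : R) : R :=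
  sum_upto (fun i => yn L n x i t *
              chi (INR i * elln L n) (INR (S i) * elln L n) z) (Nn n).

(* Main.v *)
Require Import Defs.
From Stdlib Require Import Reals Lra Lia Classical.
Open Scope R_scope.

Lemma sum_ext (f g : nat -> R) k : (forall i, (i < k)%nat -> f i = g i) -> sum_upto f k = sum_upto g k.
Proof. induction k; simpl; intros H; auto. rewrite IHk by (intros; apply H; lia). rewrite H by lia. auto. Qed.

Lemma sum_plus (f g : nat -> R) k : sum_upto (fun i => f i + g i) k = sum_upto f k + sum_upto g k.
Proof. induction k; simpl; [lra|rewrite IHk; lra]. Qed.

Lemma sum_minus (f g : nat -> R) k : sum_upto (fun i => f i - g i) k = sum_upto f k - sum_upto g k.
Proof. induction k; simpl; [lra|rewrite IHk; lra]. Qed.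

Lemma sum_scal (c : R) (f : nat -> R) k : sum_upto (fun i => c * f i) k = c * sum_upto f k.
Proof. induction k; simpl; [lra|rewrite IHk; lra]. Qed.

Lemma sum_le (f g : nat -> R) k : (forall i, (i < k)%nat -> f i <= g i) -> sum_upto f k <= sum_upto g k.
Proof. induction k; simpl; intros H; [lra|]. assert (f k <= g k) by (apply H; lia).
 assert (sum_upto f k <= sum_upto g k) by (apply IHk; intros; apply H; lia). lra. Qed.

Lemma sum_tele (g : nat -> R) k : sum_upto (fun i => g (S i) - g i) k = g k - g O.
Proof. induction k; simpl; [lra|rewrite IHk; lra]. Qed.

Lemma sum_abs (f : nat -> R) k : Rabs (sum_upto f k) <= sum_upto (fun i => Rabs (f i)) k.
Proof. induction k; simpl. rewrite Rabs_R0; lra.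
 eapply Rle_trans. apply Rabs_triang. lra. Qed.

Lemma sum_deriv (g g' : nat -> R -> R) k t :
  (forall i, (i < k)%nat -> derivable_pt_lim (g i) t (g' i t)) ->
  derivable_pt_lim (fun u => sum_upto (fun i => g i u) k) t (sum_upto (fun i => g' i t) k).
Proof. induction k; simpl; intros H.
 - apply derivable_pt_lim_const.
 - apply (derivable_pt_lim_plus (fun u => sum_upto (fun i => g i u) k) (g k)).
   apply IHk; intros; apply H; lia. apply H; lia. Qed.

Lemma sum_single (f : nat -> R) k j : (j < k)%nat -> (forall i, (i < k)%nat -> i <> j -> f i = 0) ->
  sum_upto f k = f j.
Proof. induction k; simpl; intros Hj H. lia.
 destruct (Nat.eq_dec j k) as [->|Hne].
 - rewrite (sum_ext f (fun _ => 0)). clear. assert (sum_upto (fun _ => 0) k = 0). induction k; simpl; lra. lra.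
   intros; apply H; lia.
 - rewrite IHk by (try lia; intros; apply H; lia). rewrite (H k) by lia. lra. Qed.

Lemma fin_delta (N : nat) (P : nat -> R -> Prop) :
  (forall j d d', 0 < d' <= d -> P j d -> P j d') ->
  (forall j, (j < N)%nat -> exists d, 0 < d /\ P j d) ->
  exists d, 0 < d /\ forall j, (j < N)%nat -> P j d.
Proof. intros Hm. induction N; intros H.
 - exists 1. split. lra. intros; lia.
 - destruct IHN as [d1 [Hd1 H1]]. intros; apply H; lia.
   destruct (H N) as [d2 [Hd2 H2]]. lia.
   exists (Rmin d1 d2). split. apply Rmin_pos; auto.
   intros j Hj. destruct (Nat.eq_dec j N) as [->|].
   + apply Hm with d2; auto. split. apply Rmin_pos; auto. apply Rmin_r.
   + apply Hm with d1; auto. split. apply Rmin_pos; auto. apply Rmin_l. apply H1; lia. Qed.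

Lemma cont_eps f x : continuity_pt f x -> forall e, 0 < e -> exists d, 0 < d /\ forall u, Rabs (u - x) < d -> Rabs (f u - f x) < e.
Proof. intros H e He. destruct (H e He) as [d [Hd Hu]]. exists d. split. lra.
 intros u Hux. destruct (Req_dec u x) as [->|Hne]. rewrite Rminus_diag, Rabs_R0; lra.
 apply (Hu u). split. split. exact I. auto. exact Hux. Qed.

Lemma deriv_neg_left h t l : derivable_pt_lim h t l -> l < 0 ->
  exists d, 0 < d /\ forall k, -d < k < 0 -> h (t + k) > h t.
Proof. intros H Hl. destruct (H (- l / 2)) as [d Hd]. lra.
 exists (pos d). split. apply cond_pos. intros k Hk.
 assert (Hk0 : k <> 0) by lra. assert (Habs : Rabs k < d) by (rewrite Rabs_left; lra).
 specialize (Hd k Hk0 Habs).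
 assert (Hq : (h (t + k) - h t) / k < l / 2).
 { apply Rabs_def2 in Hd. lra. }
 assert (Hq2 : (h (t+k) - h t) / k * k = h (t+k) - h t) by (field; lra).
 assert ((h (t + k) - h t) / k * k > l / 2 * k) by nra. nra. Qed.

Lemma barrier (N : nat) (f : nat -> R -> R) (phi : R -> R) (a T : R) :
  a < T ->
  (forall t, a < t <= T -> continuity_pt phi t) ->
  (forall j t, (j < N)%nat -> a < t <= T -> continuity_pt (f j) t) ->
  (exists eta, a < eta /\ forall j t, (j < N)%nat -> a < t <= eta -> f j t < phi t) ->
  (forall i t, (i < N)%nat -> a < t <= T -> f i t = phi t ->
     (forall j, (j < N)%nat -> f j t <= phi t) ->
     exists l, derivable_pt_lim (fun u => f i u - phi u) t l /\ l < 0) ->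
  forall j, (j < N)%nat -> f j T < phi T.
Proof.
  intros HaT Hphi Hf [eta [Heta Hinit]] Hcross.
  destruct (Rle_dec T eta) as [HTe|HTe].
  { intros j Hj. apply Hinit; auto; lra. }
  assert (HeT : eta < T) by lra. clear HTe.
  set (E := fun t => eta <= t <= T /\ forall j u, (j < N)%nat -> a < u <= t -> f j u < phi u).
  assert (HEb : bound E). { exists T. intros t [Ht _]. lra. }
  assert (HEe : exists t, E t). { exists eta. split. lra. intros; apply Hinit; auto; lra. }
  destruct (completeness E HEb HEe) as [m [Hub Hlub]].
  assert (Hem : eta <= m). { apply Hub. split. lra. intros; apply Hinit; auto; lra. }
  assert (HmT : m <= T). { apply Hlub. intros t [Ht _]. lra. }
  assert (Hbelow : forall j u, (j < N)%nat -> a < u < m -> f j u < phi u).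
  { intros j u Hj Hu. destruct (Rle_dec u eta). apply Hinit; auto; lra.
    destruct (classic (exists t, E t /\ u < t)) as [[t [[_ Ht] Hut]]|Hno].
    - apply Ht; auto; lra.
    - exfalso. assert (m <= u). { apply Hlub. intros t Et. destruct (Rle_dec t u); auto.
        exfalso; apply Hno; exists t; split; auto; lra. } lra. }
  assert (Hcg : forall j, (j < N)%nat -> continuity_pt (fun u => f j u - phi u) m).
  { intros j Hj. apply continuity_pt_minus. apply Hf; auto; lra. apply Hphi; lra. }
  assert (Hat : forall j, (j < N)%nat -> f j m <= phi m).
  { intros j Hj. destruct (Rle_dec (f j m) (phi m)) as [|Hgt]; auto. exfalso.
    destruct (cont_eps _ _ (Hcg j Hj) (f j m - phi m)) as [d [Hd Hu]]. lra.
    set (u := m - Rmin d (m - a) / 2).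
    assert (Hmin1 : Rmin d (m - a) <= d) by apply Rmin_l.
    assert (Hmin2 : Rmin d (m - a) <= m - a) by apply Rmin_r.
    assert (Hmin3 : 0 < Rmin d (m - a)) by (apply Rmin_pos; lra).
    assert (Hfu : f j u < phi u) by (apply Hbelow; auto; unfold u; lra).
    specialize (Hu u). assert (Rabs (u - m) < d) by (unfold u; rewrite Rabs_left; lra).
    specialize (Hu H). apply Rabs_def2 in Hu. lra. }
  destruct (classic (exists i, (i < N)%nat /\ f i m = phi m)) as [[i [Hi Heq]]|Hnone].
  - exfalso. destruct (Hcross i m Hi ltac:(lra) Heq Hat) as [l [Hd Hl]].
    destruct (deriv_neg_left _ _ _ Hd Hl) as [d [Hd0 Hk]].
    assert (Hmin1 : Rmin d (m - a) <= d) by apply Rmin_l.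
    assert (Hmin2 : Rmin d (m - a) <= m - a) by apply Rmin_r.
    assert (Hmin3 : 0 < Rmin d (m - a)) by (apply Rmin_pos; lra).
    specialize (Hk (- (Rmin d (m - a) / 2)) ltac:(lra)).
    assert (f i (m + - (Rmin d (m - a) / 2)) < phi (m + - (Rmin d (m - a) / 2))) by (apply Hbelow; auto; lra).
    lra.
  - assert (Hstr : forall j, (j < N)%nat -> f j m < phi m).
    { intros j Hj. destruct (Rle_lt_or_eq_dec _ _ (Hat j Hj)); auto. exfalso; apply Hnone; eauto. }
    destruct (Req_dec m T) as [<-|HmT']. exact Hstr.
    exfalso.
    destruct (fin_delta N (fun j d => forall u, m <= u < m + d -> f j u < phi u)) as [d [Hd Hall]].
    { intros j d d' Hdd H u Hu. apply H; lra. }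
    { intros j Hj. destruct (cont_eps _ _ (Hcg j Hj) (phi m - f j m)) as [d [Hd Hu]].
      specialize (Hstr j Hj); lra. exists d. split; auto. intros u Hu'.
      assert (Rabs (u - m) < d) by (apply Rabs_def1; lra). specialize (Hu u H). apply Rabs_def2 in Hu. lra. }
    assert (Hmin1 : Rmin d (T - m) <= d) by apply Rmin_l.
    assert (Hmin2 : Rmin d (T - m) <= T - m) by apply Rmin_r.
    assert (Hmin3 : 0 < Rmin d (T - m)) by (apply Rmin_pos; lra).
    assert (E (m + Rmin d (T - m) / 2)).
    { split. lra. intros j u Hj Hu. destruct (Rlt_dec u m). apply Hbelow; auto; lra.
      apply Hall; auto; lra. }
    apply Hub in H. lra.
Qed.

Definition WW (v : R -> R) (vmax L : R) (n : nat) (x : nat -> R -> R) (i : nat) (t : R) : R :=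
  if Compare_dec.lt_dec i (Nn n) then v (yn L n x i t) else vmax.
Definition dd (x : nat -> R -> R) (i : nat) (t : R) : R := x (S i) t - x i t.
Definition zz v vmax L n x i t := (WW v vmax L n x (S i) t - WW v vmax L n x i t) / dd x i t.
Definition aa (v dv : R -> R) (L : R) (n : nat) (x : nat -> R -> R) (i : nat) (t : R) : R :=
  if Compare_dec.lt_dec i (Nn n) then - (yn L n x i t * dv (yn L n x i t)) else 0.

Lemma dpl_eq f t l l' : derivable_pt_lim f t l -> l = l' -> derivable_pt_lim f t l'.
Proof. intros H ->; exact H. Qed.

Lemma elln_pos L n : 0 < L -> 0 < elln L n.
Proof. intros; unfold elln. apply Rdiv_lt_0_compat; auto. apply pow_lt; lra. Qed.




Lemma dd_pos v vmax L n xbar x : ftl_solution v vmax L n xbar x ->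
  forall i t, (i < Nn n)%nat -> 0 <= t -> 0 < dd x i t.
Proof. intros [_ [_ [H _]]] i t Hi Ht. unfold dd. specialize (H i t Hi Ht). lra. Qed.

Lemma yn_pos v vmax L n xbar x : 0 < L -> ftl_solution v vmax L n xbar x ->
  forall i t, (i < Nn n)%nat -> 0 <= t -> 0 < yn L n x i t.
Proof. intros HL Hx i t Hi Ht. unfold yn. apply Rdiv_lt_0_compat. apply elln_pos; auto.
 apply (dd_pos _ _ _ _ _ _ Hx i t Hi Ht). Qed.

Lemma d_x v vmax L n xbar x : ftl_solution v vmax L n xbar x ->
  forall i t, (i <= Nn n)%nat -> 0 < t -> derivable_pt_lim (x i) t (WW v vmax L n x i t).
Proof. intros [_ [_ [_ [HN Hi]]]] i t Hin Ht. unfold WW. destruct (Compare_dec.lt_dec i (Nn n)).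
 - apply Hi; auto.
 - assert (i = Nn n) by lia. subst. apply HN; auto. Qed.

Lemma d_d v vmax L n xbar x : ftl_solution v vmax L n xbar x ->
  forall i t, (i < Nn n)%nat -> 0 < t ->
  derivable_pt_lim (dd x i) t (WW v vmax L n x (S i) t - WW v vmax L n x i t).
Proof. intros Hx i t Hi Ht. unfold dd.
 apply (derivable_pt_lim_minus (x (S i)) (x i)); apply (d_x _ _ _ _ _ _ Hx); auto; lia. Qed.

Lemma d_y v vmax L n xbar x : 0 < L -> ftl_solution v vmax L n xbar x ->
  forall i t, (i < Nn n)%nat -> 0 < t ->
  derivable_pt_lim (fun u => yn L n x i u) t (- yn L n x i t * zz v vmax L n x i t).
Proof. intros HL Hx i t Hi Ht.
 assert (Hd := dd_pos _ _ _ _ _ _ Hx i t Hi ltac:(lra)).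
 assert (H := derivable_pt_lim_div (fct_cte (elln L n)) (dd x i) t 0 _
   (derivable_pt_lim_const _ _) (d_d _ _ _ _ _ _ Hx i t Hi Ht) ltac:(lra)).
 unfold div_fct, fct_cte in H. unfold yn. eapply dpl_eq. exact H.
 unfold zz, yn, Rsqr. fold (dd x i t). field. lra. Qed.

Lemma d_W v dv vmax L n xbar x : V1 v dv -> 0 < L -> ftl_solution v vmax L n xbar x ->
  forall i t, (i <= Nn n)%nat -> 0 < t ->
  derivable_pt_lim (fun u => WW v vmax L n x i u) t (aa v dv L n x i t * zz v vmax L n x i t).
Proof. intros HV1 HL Hx i t Hi Ht. unfold WW, aa. destruct (Compare_dec.lt_dec i (Nn n)) as [Hl|Hl].
 - assert (Hy := yn_pos _ _ _ _ _ _ HL Hx i t Hl ltac:(lra)).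
   assert (H := derivable_pt_lim_comp (fun u => yn L n x i u) v t _ _
     (d_y _ _ _ _ _ _ HL Hx i t Hl Ht) (proj1 HV1 _ Hy)).
   unfold comp in H. eapply dpl_eq. exact H. ring.
 - eapply dpl_eq. apply (derivable_pt_lim_const vmax). ring. Qed.

Lemma d_z v dv vmax L n xbar x : V1 v dv -> 0 < L -> ftl_solution v vmax L n xbar x ->
  forall i t, (i < Nn n)%nat -> 0 < t ->
  derivable_pt_lim (fun u => zz v vmax L n x i u) t
    ((aa v dv L n x (S i) t * zz v vmax L n x (S i) t - aa v dv L n x i t * zz v vmax L n x i t)
       / dd x i t - zz v vmax L n x i t ^ 2).
Proof. intros HV1 HL Hx i t Hi Ht.
 assert (Hd := dd_pos _ _ _ _ _ _ Hx i t Hi ltac:(lra)).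
 assert (H1 := derivable_pt_lim_minus _ _ _ _ _
   (d_W _ _ _ _ _ _ _ HV1 HL Hx (S i) t ltac:(lia) Ht) (d_W _ _ _ _ _ _ _ HV1 HL Hx i t ltac:(lia) Ht)).
 assert (H := derivable_pt_lim_div _ (dd x i) t _ _ H1 (d_d _ _ _ _ _ _ Hx i t Hi Ht) ltac:(lra)).
 unfold div_fct, minus_fct in H. eapply dpl_eq. exact H.
 replace (zz v vmax L n x i t) with ((WW v vmax L n x (S i) t - WW v vmax L n x i t) / dd x i t) by reflexivity. unfold Rsqr. field. lra. Qed.

Lemma elln_posX L n : 0 < L -> 0 < elln L n.
Proof. intros; unfold elln. apply Rdiv_lt_0_compat; auto. apply pow_lt; lra. Qed.

Lemma F_lip F L R0 : cdf_ML F L -> is_Linf_norm F R0 ->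
  forall x y, x <= y -> 0 <= F y - F x <= R0 * (y - x).
Proof. intros [Hm _] [Hl _] x y Hxy. split. specialize (Hm x y Hxy); lra. apply Hl; auto. Qed.

Lemma R0_nonneg F L R0 : cdf_ML F L -> is_Linf_norm F R0 -> 0 <= R0.
Proof. intros H1 H2. destruct (F_lip F L R0 H1 H2 0 1 ltac:(lra)). lra. Qed.

Lemma not_ub_ex (E : R -> Prop) m u : is_lub E m -> u < m -> exists x, E x /\ u < x.
Proof. intros [Hub Hlub] Hu. apply NNPP. intros Hno. assert (m <= u). apply Hlub.
 intros x Ex. destruct (Rle_dec x u); auto. exfalso; apply Hno; exists x; split; auto; lra. lra. Qed.

Lemma lub_step F L R0 c b l : cdf_ML F L -> is_Linf_norm F R0 -> 0 < l ->
  is_lub (fun x => F x - c < l) b -> F b - c = l.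
Proof. intros HF HR Hl Hb. assert (HR0 := R0_nonneg _ _ _ HF HR).
 destruct (Rtotal_order (F b - c) l) as [Hlt|[Heq|Hgt]]; auto; exfalso.
 - set (h := (l - (F b - c)) / (R0 + 1)).
   assert (Hh : 0 < h) by (unfold h; apply Rdiv_lt_0_compat; lra).
   destruct (F_lip _ _ _ HF HR b (b + h) ltac:(lra)).
   assert (R0 * h < l - (F b - c)). { unfold h. apply (Rmult_lt_reg_r (R0 + 1)). lra.
     replace (R0 * ((l - (F b - c)) / (R0 + 1)) * (R0 + 1)) with (R0 * (l - (F b - c))) by (field; lra). nra. }
   assert (b + h <= b). { apply (proj1 Hb). lra. } lra.
 - set (h := (F b - c - l) / (R0 + 1)).
   assert (Hh : 0 < h) by (unfold h; apply Rdiv_lt_0_compat; lra).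
   destruct (not_ub_ex _ _ (b - h) Hb ltac:(lra)) as [a [Ha Hab]].
   destruct (F_lip _ _ _ HF HR (b - h) b ltac:(lra)).
   destruct (F_lip _ _ _ HF HR (b - h) a ltac:(lra)).
   assert (R0 * h < F b - c - l). { unfold h. apply (Rmult_lt_reg_r (R0 + 1)). lra.
     replace (R0 * ((F b - c - l) / (R0 + 1)) * (R0 + 1)) with (R0 * (F b - c - l)) by (field; lra). nra. }
   lra.
Qed.

Lemma small_pos_h R0 q : 0 <= R0 -> 0 < q -> exists h, 0 < h /\ R0 * h < q.
Proof. intros. exists (q / (R0 + 1)). split. apply Rdiv_lt_0_compat; lra.
 apply (Rmult_lt_reg_r (R0 + 1)). lra.
 replace (R0 * (q / (R0 + 1)) * (R0 + 1)) with (R0 * q) by (field; lra). nra. Qed.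

Lemma F_xmin_le0 F L R0 xmin xmax : 0 < L -> cdf_ML F L -> is_Linf_norm F R0 ->
  smallest_interval F xmin xmax -> F xmin <= 0.
Proof. intros HL HF HR [Hs _]. assert (HR0 := R0_nonneg _ _ _ HF HR).
 destruct HF as [Hm [a0 [b0 Hab]]] eqn:EHF; clear EHF.
 set (E := fun x => F x <= 0).
 assert (HEb : bound E). { exists b0. intros x Ex. destruct (Rle_dec x b0); auto.
   destruct (Hab x) as [_ Hx]. unfold E in Ex. rewrite Hx in Ex; lra. }
 assert (HEe : exists x, E x). { exists (Rmin a0 b0). destruct (Hab (Rmin a0 b0)) as [H _].
   unfold E; rewrite H. lra. apply Rmin_l. }
 destruct (completeness E HEb HEe) as [c Hc].
 assert (Hsup : in_supp F c).
 { intros e He. assert (Hc1 : ~ E (c + e)). { intros Ec. apply (proj1 Hc) in Ec. lra. }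
   destruct (not_ub_ex _ _ (c - e) Hc ltac:(lra)) as [u [Eu Hu]].
   assert (F (c - e) <= F u) by (apply Hm; lra). unfold E in *. lra. }
 destruct (Hs c Hsup) as [Hxc _].
 assert (F c <= 0).
 { destruct (Rle_dec (F c) 0) as [|Hgt]; auto. exfalso.
   destruct (small_pos_h R0 (F c) HR0 ltac:(lra)) as [h [Hh HRh]].
   destruct (not_ub_ex _ _ (c - h) Hc ltac:(lra)) as [u [Eu Hu]].
   destruct (F_lip _ _ _ HF HR (c - h) c ltac:(lra)).
   assert (F (c - h) <= F u) by (apply Hm; lra). unfold E in *. nra. }
 assert (F xmin <= F c) by (apply Hm; auto). lra. Qed.

Lemma F_xmax_geL F L R0 xmin xmax : 0 < L -> cdf_ML F L -> is_Linf_norm F R0 ->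
  smallest_interval F xmin xmax -> L <= F xmax.
Proof. intros HL HF HR [Hs _]. assert (HR0 := R0_nonneg _ _ _ HF HR).
 destruct HF as [Hm [a0 [b0 Hab]]] eqn:EHF; clear EHF.
 set (E := fun x => F x < L).
 assert (HEb : bound E). { exists b0. intros x Ex. destruct (Rle_dec x b0); auto.
   destruct (Hab x) as [_ Hx]. unfold E in Ex. rewrite Hx in Ex; lra. }
 assert (HEe : exists x, E x). { exists (Rmin a0 b0). destruct (Hab (Rmin a0 b0)) as [H _].
   unfold E; rewrite H. lra. apply Rmin_l. }
 destruct (completeness E HEb HEe) as [c Hc].
 assert (Hsup : in_supp F c).
 { intros e He. assert (Hc1 : ~ E (c + e)). { intros Ec. apply (proj1 Hc) in Ec. lra. }
   destruct (not_ub_ex _ _ (c - e) Hc ltac:(lra)) as [u [Eu Hu]].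
   assert (F (c - e) <= F u) by (apply Hm; lra). unfold E in *. lra. }
 destruct (Hs c Hsup) as [_ Hxc].
 assert (L <= F c).
 { destruct (Rle_dec L (F c)) as [|Hgt]; auto. exfalso.
   destruct (small_pos_h R0 (L - F c) HR0 ltac:(lra)) as [h [Hh HRh]].
   assert (Hc1 : ~ E (c + h)). { intros Ec. apply (proj1 Hc) in Ec. lra. }
   destruct (F_lip _ _ _ HF HR c (c + h) ltac:(lra)). unfold E in *. nra. }
 assert (F c <= F xmax) by (apply Hm; auto). lra. Qed.

Lemma INR_Nn_elln L n : INR (Nn n) * elln L n = L.
Proof. unfold Nn, elln. rewrite pow_INR. replace (INR 2) with 2 by (simpl; lra). field. apply pow_nonzero. lra. Qed.

Lemma Fxbar F L R0 xmin n xbar : 0 < L -> cdf_ML F L -> is_Linf_norm F R0 ->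
  initial_points F L xmin n xbar ->
  forall i, (i <= Nn n)%nat -> F (xbar i) = F xmin + INR i * elln L n.
Proof. intros HL HF HR [H0 Hi]. induction i; intros Hin.
 - rewrite H0. simpl. lra.
 - assert (Hs := lub_step F L R0 _ _ _ HF HR (elln_posX L n HL) (Hi (S i) ltac:(lia))).
   simpl in Hs. rewrite Nat.sub_0_r in Hs. rewrite IHi in Hs by lia. rewrite S_INR. lra.
Qed.

Lemma Nn_pos n : (1 <= Nn n)%nat.
Proof. unfold Nn. assert (2 ^ n <> 0)%nat by (apply Nat.pow_nonzero; lia). lia. Qed.

Lemma y0_le v vmax F L R0 xmin n xbar x : 0 < L -> cdf_ML F L -> is_Linf_norm F R0 ->
  initial_points F L xmin n xbar -> ftl_solution v vmax L n xbar x ->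
  forall i, (i < Nn n)%nat -> yn L n x i 0 <= R0.
Proof. intros HL HF HR Hin Hx i Hi.
 destruct Hx as [H0 [_ [Hord _]]].
 assert (Hd := Hord i 0 Hi (Rle_refl 0)). rewrite !H0 in Hd by lia.
 unfold yn. rewrite !H0 by lia.
 assert (E1 := Fxbar _ _ _ _ _ _ HL HF HR Hin (S i) ltac:(lia)).
 assert (E2 := Fxbar _ _ _ _ _ _ HL HF HR Hin i ltac:(lia)).
 rewrite S_INR in E1.
 destruct (F_lip _ _ _ HF HR (xbar i) (xbar (S i)) ltac:(lra)).
 apply (Rmult_le_reg_r (xbar (S i) - xbar i)). lra.
 unfold Rdiv. rewrite Rmult_assoc, Rinv_l by lra. lra. Qed.

Lemma D0_le F L R0 xmin xmax n xbar : 0 < L -> cdf_ML F L -> is_Linf_norm F R0 ->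
  smallest_interval F xmin xmax -> initial_points F L xmin n xbar ->
  xbar (Nn n) - xbar O <= xmax - xmin.
Proof. intros HL HF HR Hs Hin.
 assert (HN := Nn_pos n).
 assert (E1 := Fxbar _ _ _ _ _ _ HL HF HR Hin (Nn n - 1) ltac:(lia)).
 assert (Hmin := F_xmin_le0 _ _ _ _ _ HL HF HR Hs).
 assert (Hmax := F_xmax_geL _ _ _ _ _ HL HF HR Hs).
 assert (HNl := INR_Nn_elln L n).
 assert (INR (Nn n - 1) + 1 = INR (Nn n)). { rewrite minus_INR by lia. simpl. lra. }
 destruct Hin as [H0 Hi]. rewrite H0.
 destruct (Hi (Nn n) ltac:(lia)) as [_ Hlub].
 assert (xbar (Nn n) <= xmax). { apply Hlub. intros y Hy.
   destruct (Rle_dec y xmax); auto. exfalso.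
   assert (F xmax <= F y) by (apply (proj1 HF); lra). simpl in Hy. nra. }
 lra. Qed.

Lemma dcont f t l : derivable_pt_lim f t l -> continuity_pt f t.
Proof. intros H; apply derivable_continuous_pt; exists l; exact H. Qed.

Lemma v_anti v dv : V1 v dv -> forall a b, 0 <= a -> a <= b -> v b <= v a.
Proof. intros [_ [_ [_ H]]] a b Ha Hab. destruct (Req_dec a b) as [->|]. lra.
 apply Rlt_le, H; auto; lra. Qed.

Lemma limit_ext f g D l x0 : (forall u, D u -> f u = g u) -> limit1_in f D l x0 -> limit1_in g D l x0.
Proof. intros He H e He0. destruct (H e He0) as [a [Ha Hu]]. exists a; split; auto.
 intros u [Du Hd]. rewrite <- He by auto. apply Hu; auto. Qed.

Lemma limit_cst c D x0 : limit1_in (fun _ => c) D c x0.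
Proof. intros e He. exists 1. split. lra. intros u _. simpl. unfold R_dist. rewrite Rminus_diag, Rabs_R0; lra. Qed.

Lemma d_affine (A B t : R) : derivable_pt_lim (fun u => A + B * u) t B.
Proof. assert (H := derivable_pt_lim_plus (fct_cte A) (mult_real_fct B id) t 0 (B * 1)
   (derivable_pt_lim_const A t) (derivable_pt_lim_scal id B t 1 (derivable_pt_lim_id t))).
 unfold plus_fct, mult_real_fct, fct_cte, id in H. eapply dpl_eq. exact H. ring. Qed.

Lemma d_hyp (c t0 t : R) : t <> t0 -> derivable_pt_lim (fun u => c / (u - t0)) t (- c / (t - t0) ^ 2).
Proof. intros Ht.
 assert (H1 : derivable_pt_lim (fun u => -t0 + 1 * u) t 1) by apply d_affine.
 assert (H := derivable_pt_lim_div (fct_cte c) (fun u => -t0 + 1 * u) t 0 1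
   (derivable_pt_lim_const c t) H1 ltac:(lra)).
 unfold div_fct, fct_cte in H.
 assert (Hf : (fun u => c / (u - t0)) = (fun u => c / (-t0 + 1 * u))).
 { apply FunctionalExtensionality.functional_extensionality. intros u. f_equal. ring. }
 rewrite Hf. eapply dpl_eq. exact H. unfold Rsqr. field. lra. Qed.

Lemma a_nonneg v dv L n x i t : V3 dv -> 0 <= yn L n x i t -> 0 <= aa v dv L n x i t.
Proof. intros HV3 Hy. unfold aa. destruct (Compare_dec.lt_dec i (Nn n)); [|lra].
 assert (H := HV3 0 (yn L n x i t) (Rle_refl 0) Hy). lra. Qed.

Lemma y_le_R0 v dv vmax F L R0 xmin n xbar x :
  V1 v dv -> V2 v vmax -> 0 < L -> cdf_ML F L -> is_Linf_norm F R0 ->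
  initial_points F L xmin n xbar -> ftl_solution v vmax L n xbar x ->
  forall T i, 0 < T -> (i < Nn n)%nat -> yn L n x i T <= R0.
Proof. intros HV1 HV2 HL HF HR Hin Hx T i HT Hi.
 assert (Hy0 := y0_le _ _ _ _ _ _ _ _ _ HL HF HR Hin Hx).
 apply Rnot_lt_le. intros Hlt.
 set (eps := (yn L n x i T - R0) / (2 * (1 + T))).
 assert (Heps : 0 < eps) by (unfold eps; apply Rdiv_lt_0_compat; lra).
 assert (Hb : yn L n x i T < (fun u => R0 + eps * (1 + u)) T).
 { apply (barrier (Nn n) (fun j u => yn L n x j u) (fun u => R0 + eps * (1 + u)) 0 T); auto.
   - intros t Ht. apply (dcont _ _ eps). eapply (derivable_pt_lim_ext (fun u => (R0 + eps) + eps * u)).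
     intros; ring. apply d_affine.
   - intros j t Hj Ht. eapply dcont. apply (d_y _ _ _ _ _ _ HL Hx); auto; lra.
   - destruct (fin_delta (Nn n) (fun j d => forall u, 0 < u <= d -> yn L n x j u < R0 + eps * (1 + u)))
       as [d [Hd Hall]].
     + intros j d d' Hdd H u Hu. apply H; lra.
     + intros j Hj.
       assert (Hrc : limit1_in (fun u => yn L n x j u) (fun t => 0 <= t) (yn L n x j 0) 0).
       { destruct Hx as [_ [Hrc [Hord _]]].
         assert (H1 := limit_minus _ _ _ _ _ _ (Hrc (S j) ltac:(lia)) (Hrc j ltac:(lia))).
         assert (Hne : x (S j) 0 - x j 0 <> 0) by (specialize (Hord j 0 Hj (Rle_refl 0)); lra).
         assert (H2 := limit_inv _ _ _ _ H1 Hne).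
         assert (H3 := limit_mul _ _ _ _ _ _ (limit_cst (elln L n) (fun t => 0 <= t) 0) H2).
         unfold yn. exact H3. }
       destruct (Hrc eps Heps) as [al [Hal Hu]].
       exists (al / 2). split. lra. intros u Hu'.
       assert (Hd : R_dist u 0 < al) by (unfold R_dist; rewrite Rminus_0_r, Rabs_right; lra).
       assert (Hu0 : 0 <= u) by lra. specialize (Hu u (conj Hu0 Hd)). simpl in Hu. unfold R_dist in Hu.
       apply Rabs_def2 in Hu. specialize (Hy0 j Hj). nra.
     + exists (Rmin d T). split. apply Rmin_pos; lra.
       intros j t Hj Ht. apply Hall; auto. split. lra. assert (Rmin d T <= d) by apply Rmin_l. lra.
   - intros k t Hk Ht Heq Hle.
     exists (- yn L n x k t * zz v vmax L n x k t - eps). split.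
     + apply (derivable_pt_lim_minus (fun u => yn L n x k u) (fun u => R0 + eps * (1 + u))).
       apply (d_y _ _ _ _ _ _ HL Hx); auto; lra.
       eapply (derivable_pt_lim_ext (fun u => (R0 + eps) + eps * u)). intros; ring. apply d_affine.
     + assert (Hyk := yn_pos _ _ _ _ _ _ HL Hx k t Hk ltac:(lra)).
       assert (Hdk := dd_pos _ _ _ _ _ _ Hx k t Hk ltac:(lra)).
       assert (HW : WW v vmax L n x k t <= WW v vmax L n x (S k) t).
       { unfold WW. destruct (Compare_dec.lt_dec k (Nn n)) as [_|]; [|lia].
         destruct (Compare_dec.lt_dec (S k) (Nn n)) as [HSk|HSk].
         - apply (v_anti _ _ HV1). apply Rlt_le, (yn_pos _ _ _ _ _ _ HL Hx); auto; lra.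
           specialize (Hle (S k) HSk). simpl in Hle, Heq. lra.
         - rewrite <- HV2. apply (v_anti _ _ HV1); lra. }
       assert (0 <= zz v vmax L n x k t). { unfold zz. apply Rmult_le_pos; [lra| apply Rlt_le, Rinv_0_lt_compat; lra]. }
       nra. }
 simpl in Hb. unfold eps in Hb.
 assert ((yn L n x i T - R0) / (2 * (1 + T)) * (1 + T) = (yn L n x i T - R0) / 2) by (field; lra).
 lra.
Qed.

Lemma z_le v dv vmax L n xbar x :
  V1 v dv -> V3 dv -> 0 < L -> ftl_solution v vmax L n xbar x ->
  forall T i, 0 < T -> (i < Nn n)%nat -> zz v vmax L n x i T <= 1 / T.
Proof. intros HV1 HV3 HL Hx T i HT Hi.
 apply Rnot_lt_le. intros Hlt. set (zT := zz v vmax L n x i T) in *.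
 assert (HzT : 1 < zT * T). { apply (Rmult_lt_compat_r T) in Hlt; auto.
   replace (1 / T * T) with 1 in Hlt by (field; lra). lra. }
 assert (Hz0 : 0 < zT) by nra.
 set (c := (1 + zT * T) / 2).
 set (t0 := (T - c / zT) / 2).
 assert (Hc1 : 1 < c) by (unfold c; lra).
 assert (HcT : c / zT < T). { apply (Rmult_lt_reg_r zT); auto. unfold Rdiv. rewrite Rmult_assoc, Rinv_l by lra.
   unfold c; nra. }
 assert (Hc0 : 0 < c / zT) by (apply Rdiv_lt_0_compat; lra).
 assert (Ht0 : 0 < t0 < T) by (unfold t0; lra).
 assert (Hfin : c / (T - t0) < zT).
 { apply (Rmult_lt_reg_r (T - t0)). lra. unfold Rdiv. rewrite Rmult_assoc, Rinv_l by lra.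
   assert (c / zT * zT = c) by (field; lra). unfold t0. unfold Rdiv in H. nra. }
 assert (Hb : zT < (fun u => c / (u - t0)) T).
 { apply (barrier (Nn n) (fun j u => zz v vmax L n x j u) (fun u => c / (u - t0)) t0 T); auto; try lra.
   - intros t Ht. eapply dcont. apply d_hyp. lra.
   - intros j t Hj Ht. eapply dcont. apply (d_z _ _ _ _ _ _ _ HV1 HL Hx); auto; lra.
   - destruct (fin_delta (Nn n) (fun j d => forall u, t0 < u <= t0 + d -> zz v vmax L n x j u < c / (u - t0)))
       as [d [Hd Hall]].
     + intros j d d' Hdd H u Hu. apply H; lra.
     + intros j Hj.
       assert (Hct := dcont _ _ _ (d_z _ _ _ _ _ _ _ HV1 HL Hx j t0 Hj ltac:(lra))).
       destruct (cont_eps _ _ Hct 1 ltac:(lra)) as [de [Hde Hu]].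
       set (B := Rabs (zz v vmax L n x j t0) + 2).
       assert (HB : 2 <= B) by (unfold B; assert (0 <= Rabs (zz v vmax L n x j t0)) by apply Rabs_pos; lra).
       exists (Rmin (de / 2) (c / B)). split. apply Rmin_pos. lra. apply Rdiv_lt_0_compat; lra.
       intros u Hu'. assert (Hm1 : Rmin (de / 2) (c / B) <= de / 2) by apply Rmin_l.
       assert (Hm2 : Rmin (de / 2) (c / B) <= c / B) by apply Rmin_r.
       assert (Habs : Rabs (u - t0) < de) by (rewrite Rabs_right; lra).
       specialize (Hu u Habs). apply Rabs_def2 in Hu.
       assert (Hz : zz v vmax L n x j u < B).
       { unfold B. assert (zz v vmax L n x j t0 <= Rabs (zz v vmax L n x j t0)) by apply RRle_abs. lra. }
       assert (B <= c / (u - t0)).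
       { apply (Rmult_le_reg_r (u - t0)). lra. unfold Rdiv. rewrite Rmult_assoc, Rinv_l by lra.
         assert (c / B * B = c) by (field; lra). unfold Rdiv in H. nra. }
       lra.
     + exists (t0 + Rmin d (T - t0)). split. assert (0 < Rmin d (T - t0)) by (apply Rmin_pos; lra). lra.
       intros j t Hj Ht. assert (Rmin d (T - t0) <= d) by apply Rmin_l. apply Hall; auto; lra.
   - intros k t Hk Ht Heq Hle. simpl in Heq, Hle.
     eexists. split.
     + apply (derivable_pt_lim_minus (fun u => zz v vmax L n x k u) (fun u => c / (u - t0))).
       apply (d_z _ _ _ _ _ _ _ HV1 HL Hx); auto; lra. apply d_hyp; lra.
     + set (p := c / (t - t0)) in *.
       assert (Hp : 0 < p) by (unfold p; apply Rdiv_lt_0_compat; lra).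
       assert (Hq : c / (t - t0) ^ 2 * c = p * p) by (unfold p; field; lra).
       assert (Hq0 : 0 < c / (t - t0) ^ 2) by (apply Rdiv_lt_0_compat; [lra| apply pow_lt; lra]).
       assert (Hdk := dd_pos _ _ _ _ _ _ Hx k t Hk ltac:(lra)).
       assert (Hyk := yn_pos _ _ _ _ _ _ HL Hx k t Hk ltac:(lra)).
       assert (Hak := a_nonneg v dv L n x k t HV3 ltac:(lra)).
       assert (Hnum : aa v dv L n x (S k) t * zz v vmax L n x (S k) t - aa v dv L n x k t * zz v vmax L n x k t <= 0).
       { rewrite Heq. destruct (Compare_dec.lt_dec (S k) (Nn n)) as [HSk|HSk].
         - assert (HyS := yn_pos _ _ _ _ _ _ HL Hx (S k) t HSk ltac:(lra)).
           assert (HaS := a_nonneg v dv L n x (S k) t HV3 ltac:(lra)).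
           assert (HzS := Hle (S k) HSk).
           assert (Hlty : yn L n x (S k) t < yn L n x k t).
           { apply Rnot_le_lt. intros Hge.
             assert (Hv := v_anti _ _ HV1 (yn L n x k t) _ ltac:(lra) Hge).
             assert (Hzk : 0 < zz v vmax L n x k t) by lra.
             unfold zz, WW in Hzk. destruct (Compare_dec.lt_dec (S k) (Nn n)); [|lia].
             destruct (Compare_dec.lt_dec k (Nn n)); [|lia].
             fold (dd x k t) in Hzk.
             assert (0 < (v (yn L n x (S k) t) - v (yn L n x k t)) / dd x k t * dd x k t) by nra.
             replace ((v (yn L n x (S k) t) - v (yn L n x k t)) / dd x k t * dd x k t)
               with (v (yn L n x (S k) t) - v (yn L n x k t)) in H by (field; lra). lra. }
           assert (Hv3 := HV3 (yn L n x (S k) t) _ ltac:(lra) (Rlt_le _ _ Hlty)).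
           assert (aa v dv L n x (S k) t <= aa v dv L n x k t).
           { unfold aa. destruct (Compare_dec.lt_dec (S k) (Nn n)); [|lia].
             destruct (Compare_dec.lt_dec k (Nn n)); [|lia]. lra. }
           nra.
         - unfold aa at 1. destruct (Compare_dec.lt_dec (S k) (Nn n)); [lia|]. nra. }
       assert (Hfrac : (aa v dv L n x (S k) t * zz v vmax L n x (S k) t - aa v dv L n x k t * zz v vmax L n x k t) / dd x k t <= 0).
       { apply (Rmult_le_reg_r (dd x k t)); auto. rewrite Rmult_0_l. unfold Rdiv. rewrite Rmult_assoc, Rinv_l by lra. lra. }
       rewrite Heq. nra. }
 simpl in Hb. lra.
Qed.

Lemma growth v dv vmax F L R0 xmin n xbar x :
  V1 v dv -> V2 v vmax -> 0 < L -> cdf_ML F L -> is_Linf_norm F R0 ->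
  initial_points F L xmin n xbar -> ftl_solution v vmax L n xbar x ->
  forall T, 0 < T -> x (Nn n) T - x O T <= (xbar (Nn n) - xbar O) + T * (vmax - v R0).
Proof. intros HV1 HV2 HL HF HR Hin Hx T HT.
 assert (HN := Nn_pos n). assert (HR0 := R0_nonneg _ _ _ HF HR).
 assert (HK1 : 0 <= vmax - v R0) by (assert (v R0 <= v 0) by (apply (v_anti _ _ HV1); lra); unfold V2 in HV2; lra).
 set (g := fun u => x (Nn n) u - x O u).
 assert (Hstep : forall eta, 0 < eta < T -> g T <= g eta + T * (vmax - v R0)).
 { intros eta Heta.
   destruct (MVT_cor2 g (fun u => WW v vmax L n x (Nn n) u - WW v vmax L n x O u) eta T ltac:(lra)) as [c [Hc Hcr]].
   { intros c Hc. apply derivable_pt_lim_minus; apply (d_x _ _ _ _ _ _ Hx); lia || lra. }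
   assert (HW : WW v vmax L n x (Nn n) c - WW v vmax L n x 0 c <= vmax - v R0).
   { unfold WW. destruct (Compare_dec.lt_dec (Nn n) (Nn n)); [lia|].
     destruct (Compare_dec.lt_dec 0 (Nn n)); [|lia].
     assert (Hy := y_le_R0 _ _ _ _ _ _ _ _ _ _ HV1 HV2 HL HF HR Hin Hx c 0 ltac:(lra) ltac:(lia)).
     assert (Hy0 := yn_pos _ _ _ _ _ _ HL Hx 0 c ltac:(lia) ltac:(lra)).
     assert (v R0 <= v (yn L n x 0 c)) by (apply (v_anti _ _ HV1); lra). lra. }
   assert ((WW v vmax L n x (Nn n) c - WW v vmax L n x 0 c) * (T - eta) <= (vmax - v R0) * T) by nra.
   lra. }
 assert (Hg0 : g 0 = xbar (Nn n) - xbar O).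
 { unfold g. destruct Hx as [H0 _]. rewrite !H0 by lia. auto. }
 fold (g T). rewrite <- Hg0.
 apply Rnot_lt_le. intros Hlt.
 assert (Hrc : limit1_in g (fun t => 0 <= t) (g 0) 0).
 { destruct Hx as [_ [Hrc _]]. apply limit_minus; apply Hrc; lia. }
 destruct (Hrc (g T - (g 0 + T * (vmax - v R0))) ltac:(lra)) as [al [Hal Hu]].
 set (eta := Rmin al T / 2).
 assert (Hm1 : Rmin al T <= al) by apply Rmin_l. assert (Hm2 : Rmin al T <= T) by apply Rmin_r.
 assert (Hm3 : 0 < Rmin al T) by (apply Rmin_pos; lra).
 assert (Hd : R_dist eta 0 < al) by (unfold R_dist, eta; rewrite Rminus_0_r, Rabs_right; lra).
 assert (He0 : 0 <= eta) by (unfold eta; lra).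
 specialize (Hu eta (conj He0 Hd)). simpl in Hu. unfold R_dist in Hu. apply Rabs_def2 in Hu.
 specialize (Hstep eta ltac:(unfold eta; lra)). lra.
Qed.

Lemma pointwise v dv vmax F L R0 xmin xmax n xbar x delta :
  V1 v dv -> V2 v vmax -> V3 dv -> 0 < L -> cdf_ML F L -> is_Linf_norm F R0 ->
  smallest_interval F xmin xmax ->
  initial_points F L xmin n xbar -> ftl_solution v vmax L n xbar x -> 0 < delta ->
  forall tau, delta <= tau ->
  sum_upto (fun i => elln L n * Rabs (yn L n x i tau * zz v vmax L n x i tau)) (Nn n)
   <= R0 ^ 2 * ((3 * (vmax - v R0) + 2 * (xmax - xmin) / delta) + (vmax - v R0)).
Proof. intros HV1 HV2 HV3 HL HF HR Hs Hin Hx Hdel tau Htau.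
 assert (HN := Nn_pos n). assert (HR0 := R0_nonneg _ _ _ HF HR).
 assert (HK1 : 0 <= vmax - v R0) by (assert (v R0 <= v 0) by (apply (v_anti _ _ HV1); lra); unfold V2 in HV2; lra).
 assert (Hl := elln_pos L n HL).
 eapply Rle_trans.
 { apply (sum_le _ (fun i => R0 ^ 2 * (2 / tau * (x (S i) tau - x i tau)
              - (WW v vmax L n x (S i) tau - WW v vmax L n x i tau)))).
   intros i Hi.
   assert (Hd := dd_pos _ _ _ _ _ _ Hx i tau Hi ltac:(lra)).
   assert (Hy := yn_pos _ _ _ _ _ _ HL Hx i tau Hi ltac:(lra)).
   assert (HyR := y_le_R0 _ _ _ _ _ _ _ _ _ _ HV1 HV2 HL HF HR Hin Hx tau i ltac:(lra) Hi).
   assert (Hz := z_le _ _ _ _ _ _ _ HV1 HV3 HL Hx tau i ltac:(lra) Hi).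
   unfold dd in Hd.
   set (Del := WW v vmax L n x (S i) tau - WW v vmax L n x i tau) in *.
   set (d := x (S i) tau - x i tau) in *.
   assert (Hzd : zz v vmax L n x i tau = Del / d) by reflexivity.
   assert (Hyd : yn L n x i tau = elln L n / d) by reflexivity.
   assert (Hlyd : elln L n = yn L n x i tau * d) by (rewrite Hyd; field; lra).
   assert (Hdel2 : Del = zz v vmax L n x i tau * d) by (rewrite Hzd; field; lra).
   assert (Hterm : elln L n * Rabs (yn L n x i tau * zz v vmax L n x i tau)
                   = yn L n x i tau ^ 2 * Rabs Del).
   { rewrite Hdel2, Hlyd, !Rabs_mult. rewrite (Rabs_right d) by lra.
     rewrite (Rabs_right (yn L n x i tau)) by lra. ring. }
   rewrite Hterm.
   assert (HDb : Rabs Del <= 2 / tau * d - Del).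
   { destruct (Rle_dec 0 Del).
     - rewrite Rabs_right by lra. assert (zz v vmax L n x i tau * d <= 1 / tau * d) by (apply Rmult_le_compat_r; lra).
       unfold Rdiv in *. lra.
     - rewrite Rabs_left by lra. assert (0 <= 2 / tau * d) by (apply Rmult_le_pos; [apply Rmult_le_pos; [lra| apply Rlt_le, Rinv_0_lt_compat; lra]|lra]). lra. }
   assert (Hy2 : yn L n x i tau ^ 2 <= R0 ^ 2) by (apply pow_incr; lra).
   assert (0 <= Rabs Del) by apply Rabs_pos.
   assert (0 <= yn L n x i tau ^ 2) by (apply pow_le; lra).
   apply Rle_trans with (R0 ^ 2 * Rabs Del). apply Rmult_le_compat_r; lra.
   apply Rmult_le_compat_l. apply pow_le; lra. exact HDb. }
 rewrite sum_scal, sum_minus, sum_scal.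
 rewrite (sum_tele (fun i => x i tau)), (sum_tele (fun i => WW v vmax L n x i tau)).
 assert (HG := growth _ _ _ _ _ _ _ _ _ _ HV1 HV2 HL HF HR Hin Hx tau ltac:(lra)).
 assert (HD0 := D0_le _ _ _ _ _ _ _ HL HF HR Hs Hin).
 assert (HDpos : 0 < xbar (Nn n) - xbar O).
 { destruct Hx as [H0 [_ [Hord _]]]. rewrite <- (H0 (Nn n)), <- (H0 O) by lia.
   rewrite <- (sum_tele (fun i => x i 0)).
   destruct (Nn n) as [|N'] eqn:EN. lia. simpl.
   assert (0 <= sum_upto (fun i => x (S i) 0 - x i 0) N').
   { assert (Hz0 : sum_upto (fun _ => 0) N' = 0) by (clear; induction N'; simpl; lra).
     apply Rle_trans with (sum_upto (fun _ => 0) N'). lra. apply sum_le. intros i Hi.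
     specialize (Hord i 0 ltac:(lia) (Rle_refl 0)). lra. }
   specialize (Hord N' 0 ltac:(lia) (Rle_refl 0)). lra. }
 assert (HWN : WW v vmax L n x (Nn n) tau = vmax).
 { unfold WW. destruct (Compare_dec.lt_dec (Nn n) (Nn n)); [lia|auto]. }
 assert (HW0 : WW v vmax L n x 0 tau <= vmax).
 { unfold WW. destruct (Compare_dec.lt_dec 0 (Nn n)); [|lra].
   rewrite <- HV2. apply (v_anti _ _ HV1). lra. apply Rlt_le, (yn_pos _ _ _ _ _ _ HL Hx); auto; lra. }
 set (D := xmax - xmin) in *. set (K1 := vmax - v R0) in *.
 set (G := x (Nn n) tau - x O tau) in *.
 assert (H2 : 2 / tau * G <= 2 * D / delta + 2 * K1).
 { assert (HG2 : 2 / tau * G <= 2 / tau * (D + tau * K1)).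
   { apply Rmult_le_compat_l. apply Rmult_le_pos; [lra| apply Rlt_le, Rinv_0_lt_compat; lra]. lra. }
   assert (2 / tau * (D + tau * K1) = 2 * D / tau + 2 * K1) by (field; lra).
   assert (2 * D / tau <= 2 * D / delta).
   { unfold Rdiv. apply Rmult_le_compat_l. lra. apply Rinv_le_contravar; lra. }
   lra. }
 assert (0 <= R0 ^ 2) by (apply pow_le; lra).
 unfold Rdiv in *. nra.
Qed.

Lemma sum_zero k : sum_upto (fun _ => 0) k = 0.
Proof. induction k; simpl; lra. Qed.

Lemma sum_mvt (N : nat) (f f' : nat -> R -> R) (a b K : R) : a <= b ->
  (forall i u, (i < N)%nat -> a <= u <= b -> derivable_pt_lim (f i) u (f' i u)) ->
  (forall u, a <= u <= b -> sum_upto (fun i => Rabs (f' i u)) N <= K) ->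
  sum_upto (fun i => Rabs (f i b - f i a)) N <= K * (b - a).
Proof. intros Hab Hd HK.
 destruct (Req_dec a b) as [<-|Hne].
 { rewrite (sum_ext _ (fun _ => 0)). rewrite sum_zero. lra. intros; rewrite Rminus_diag, Rabs_R0; auto. }
 set (sg := fun i => if Rle_dec (f i a) (f i b) then 1 else -1).
 destruct (MVT_cor2 (fun u => sum_upto (fun i => sg i * f i u) N)
                    (fun u => sum_upto (fun i => sg i * f' i u) N) a b ltac:(lra)) as [c [Hc Hcr]].
 { intros c Hc. apply (sum_deriv (fun i u => sg i * f i u) (fun i u => sg i * f' i u)).
   intros i Hi. apply derivable_pt_lim_scal. apply Hd; auto. }
 assert (Hl : sum_upto (fun i => Rabs (f i b - f i a)) N =
              sum_upto (fun i => sg i * f i b) N - sum_upto (fun i => sg i * f i a) N).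
 { rewrite <- sum_minus. apply sum_ext. intros i Hi. unfold sg.
   destruct (Rle_dec (f i a) (f i b)). rewrite Rabs_right; lra. rewrite Rabs_left; lra. }
 rewrite Hl, Hc.
 assert (Habs : Rabs (sum_upto (fun i => sg i * f' i c) N) <= K).
 { eapply Rle_trans. apply sum_abs. eapply Rle_trans; [|apply (HK c); lra].
   apply sum_le. intros i Hi. rewrite Rabs_mult.
   assert (Hs : Rabs (sg i) = 1). { unfold sg. destruct (Rle_dec (f i a) (f i b)).
     rewrite Rabs_right; lra. rewrite Rabs_left; lra. }
   rewrite Hs; lra. }
 assert (Hle := Rle_abs (sum_upto (fun i => sg i * f' i c) N)). assert (0 < b - a) by lra. nra.
Qed.

Lemma l1_bound v dv vmax F L R0 xmin xmax n xbar x delta :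
  V1 v dv -> V2 v vmax -> V3 dv -> 0 < L -> cdf_ML F L -> is_Linf_norm F R0 ->
  smallest_interval F xmin xmax ->
  initial_points F L xmin n xbar -> ftl_solution v vmax L n xbar x -> 0 < delta ->
  forall t s, delta <= t -> delta <= s ->
  sum_upto (fun i => elln L n * Rabs (yn L n x i t - yn L n x i s)) (Nn n)
   <= R0 ^ 2 * ((3 * (vmax - v R0) + 2 * (xmax - xmin) / delta) + (vmax - v R0)) * Rabs (t - s).
Proof. intros HV1 HV2 HV3 HL HF HR Hs Hin Hx Hdel.
 assert (Hl := elln_pos L n HL).
 assert (Gen : forall a b, delta <= a -> a <= b ->
   sum_upto (fun i => elln L n * Rabs (yn L n x i b - yn L n x i a)) (Nn n)
   <= R0 ^ 2 * ((3 * (vmax - v R0) + 2 * (xmax - xmin) / delta) + (vmax - v R0)) * (b - a)).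
 { intros a b Ha Hab.
   assert (H := sum_mvt (Nn n) (fun i u => elln L n * yn L n x i u)
     (fun i u => elln L n * (- yn L n x i u * zz v vmax L n x i u)) a b
     (R0 ^ 2 * ((3 * (vmax - v R0) + 2 * (xmax - xmin) / delta) + (vmax - v R0))) Hab).
   rewrite (sum_ext _ (fun i => Rabs (elln L n * yn L n x i b - elln L n * yn L n x i a))).
   apply H.
   - intros i u Hi Hu. apply (derivable_pt_lim_scal (fun u => yn L n x i u)).
     apply (d_y _ _ _ _ _ _ HL Hx); auto; lra.
   - intros u Hu. eapply Rle_trans; [|apply (pointwise _ _ _ _ _ _ _ _ _ _ _ delta HV1 HV2 HV3 HL HF HR Hs Hin Hx Hdel u); lra].
     apply Req_le, sum_ext. intros i Hi. rewrite Rabs_mult, (Rabs_right (elln L n)) by lra.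
     f_equal. rewrite <- Rabs_Ropp. f_equal. ring.
   - intros i Hi. rewrite <- Rmult_minus_distr_l, Rabs_mult, (Rabs_right (elln L n)) by lra. auto. }
 intros t s Ht Hs'. destruct (Rle_dec s t).
 - rewrite Rabs_right by lra. apply Gen; auto.
 - rewrite Rabs_left by lra. replace (- (t - s)) with (s - t) by ring.
   rewrite (sum_ext _ (fun i => elln L n * Rabs (yn L n x i s - yn L n x i t))).
   apply Gen; auto; lra. intros; rewrite Rabs_minus_sym; auto.
Qed.

Lemma rho_check_at L n x t k z : 0 < L -> (k < Nn n)%nat ->
  INR k * elln L n < z < INR (S k) * elln L n -> rho_check L n x t z = yn L n x k t.
Proof. intros HL Hk Hz. assert (Hl := elln_pos L n HL). unfold rho_check.
 rewrite (sum_single _ _ k Hk).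
 - unfold chi. destruct (Rle_dec (INR k * elln L n) z); [|lra].
   destruct (Rlt_dec z (INR (S k) * elln L n)); [|lra]. ring.
 - intros i Hi Hik. unfold chi. destruct (Nat.lt_ge_cases i k) as [Hlt|Hge].
   + assert (INR (S i) <= INR k) by (apply le_INR; lia).
     destruct (Rle_dec (INR i * elln L n) z); [|ring].
     destruct (Rlt_dec z (INR (S i) * elln L n)); [|ring]. nra.
   + assert (INR (S k) <= INR i) by (apply le_INR; lia).
     destruct (Rle_dec (INR i * elln L n) z); [|ring]. nra.
Qed.

Module IntPart.
From Coquelicot Require Import Coquelicot.

Lemma integral_eq L n x t s : 0 < L ->
  exists pr : Riemann_integrable
                (fun z => Rabs (rho_check L n x t z - rho_check L n x s z)) 0 L,
    RiemannInt pr = sum_upto (fun i => elln L n * Rabs (yn L n x i t - yn L n x i s)) (Nn n).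
Proof. intros HL. assert (Hl := elln_pos L n HL).
 set (f := fun z => Rabs (rho_check L n x t z - rho_check L n x s z)).
 assert (Hk : forall k, (k <= Nn n)%nat -> is_RInt f 0 (INR k * elln L n)
      (sum_upto (fun i => elln L n * Rabs (yn L n x i t - yn L n x i s)) k)).
 { induction k; intros Hkn.
   - simpl. rewrite Rmult_0_l. apply (is_RInt_point f 0).
   - simpl sum_upto. apply (is_RInt_Chasles f 0 (INR k * elln L n) (INR (S k) * elln L n)).
     apply IHk; lia.
     apply (is_RInt_ext (fun _ => Rabs (yn L n x k t - yn L n x k s))).
     + intros z Hz. rewrite Rmin_left, Rmax_right in Hz.
       2,3: rewrite S_INR; nra.
       unfold f. rewrite !(rho_check_at L n x _ k z HL) by (auto; lia). auto.
     + replace (elln L n * Rabs (yn L n x k t - yn L n x k s)) with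
         (scal (INR (S k) * elln L n - INR k * elln L n) (Rabs (yn L n x k t - yn L n x k s))).
       exact (@is_RInt_const R_NormedModule _ _ _). rewrite S_INR. unfold scal; simpl. unfold mult; simpl. ring. }
 specialize (Hk (Nn n) (le_n _)). rewrite INR_Nn_elln in Hk.
 exists (ex_RInt_Reals_0 f 0 L (ex_intro _ _ Hk)).
 rewrite <- RInt_Reals. apply is_RInt_unique. exact Hk.
Qed.
End IntPart.

Theorem proposition3p12
  (v dv : R -> R) (vmax L : R) (F : R -> R) (R0 xmin xmax : R)
  (HV1 : V1 v dv) (HV2 : V2 v vmax) (HV3 : V3 dv)
  (HL : 0 < L) (HF : cdf_ML F L) (HR : is_Linf_norm F R0)
  (Hint : smallest_interval F xmin xmax)
  (delta : R) (Hdelta : 0 < delta)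
  (n : nat) (xbar : nat -> R) (Hxbar : initial_points F L xmin n xbar)
  (x : nat -> R -> R) (Hx : ftl_solution v vmax L n xbar x)
  (t s : R) (Ht : delta <= t) (Hs : delta <= s) :
  exists pr : Riemann_integrable
                (fun z => Rabs (rho_check L n x t z - rho_check L n x s z)) 0 L,
    RiemannInt pr <=
      R0 ^ 2 * ((3 * (vmax - v R0) + 2 * (xmax - xmin) / delta)
                + (vmax - v R0)) * Rabs (t - s).
Proof.
  destruct (IntPart.integral_eq L n x t s HL) as [pr Hpr].
  exists pr. rewrite Hpr.
  exact (l1_bound v dv vmax F L R0 xmin xmax n xbar x delta HV1 HV2 HV3 HL HF HR Hint Hxbar Hx Hdelta t s Ht Hs).
Qed.
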